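(* If $R$ is a 2-primal ring, then $\beta(R)=\mathcal N(R)=E_R(0)=\beta_{co}(R)$.
   Context: Rings are associative with identity. $\beta(R)$ is the prime radical (intersection of all prime ideals), $\beta_{co}(R)$ the intersection of all completely prime ideals (an ideal $P$ is completely prime if $ab\in P$ implies $a\in P$ or $b\in P$), $\mathcal N(R)$ the set of nilpotent elements. $R$ is 2-primal if $\mathcal N(R)=\beta(R)$. $E_R(0)=\{ab: a,b\in R, a^kb=0\text{ for some }k\in\mathbb N\}$. *)

(* Defs.v *)
From mathcomp Require Import all_boot all_algebra.
Set Implicit Arguments. Unset Strict Implicit. Unset Printing Implicit Defensive.
Import GRing.Theory.
Local Open Scope ring_scope.

(* Subsets of a ring are predicates R -> Prop. Rings: associative with 1,
   not necessarily commutative (pzRingType also allows the zero ring). *)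

Definition is_ideal (R : pzRingType) (I : R -> Prop) : Prop :=
  I 0 /\
  (forall x y, I x -> I y -> I (x - y)) /\
  (forall r x, I x -> I (r * x)) /\
  (forall r x, I x -> I (x * r)).

(* Prime ideal: proper ideal P such that for all ideals A, B,
   AB ⊆ P implies A ⊆ P or B ⊆ P. (AB ⊆ P iff all products ab lie in P,
   since P is closed under finite sums.) *)
Definition is_prime_ideal (R : pzRingType) (P : R -> Prop) : Prop :=
  is_ideal P /\ (exists x, ~ P x) /\
  (forall A B : R -> Prop, is_ideal A -> is_ideal B ->
     (forall a b, A a -> B b -> P (a * b)) ->
     (forall a, A a -> P a) \/ (forall b, B b -> P b)).

Definition is_completely_prime_ideal (R : pzRingType) (P : R -> Prop) : Prop :=
  is_ideal P /\ (exists x, ~ P x) /\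
  (forall a b, P (a * b) -> P a \/ P b).

Definition prime_radical (R : pzRingType) (x : R) : Prop :=
  forall P : R -> Prop, is_prime_ideal P -> P x.

Definition beta_co (R : pzRingType) (x : R) : Prop :=
  forall P : R -> Prop, is_completely_prime_ideal P -> P x.

Definition nilpotents (R : pzRingType) (x : R) : Prop :=
  exists n : nat, x ^+ n = 0.

Definition E_R0 (R : pzRingType) (x : R) : Prop :=
  exists a b : R, x = a * b /\ exists k : nat, a ^+ k * b = 0.

Definition set_eq (R : Type) (A B : R -> Prop) : Prop := forall x, A x <-> B x.

Definition two_primal (R : pzRingType) : Prop :=
  set_eq (@nilpotents R) (@prime_radical R).

(* Main.v *)
Require Import Defs.
From mathcomp Require Import all_boot all_algebra.
From mathcomp Require Import boolp classical_sets.
Import GRing.Theory.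
Local Open Scope classical_set_scope.
Local Open Scope ring_scope.

Section Aux.
Variable R : pzRingType.

Definition csp (I : R -> Prop) := is_ideal I /\ forall r, I (r * r) -> I r.

Lemma csp_swap I x y : csp I -> I (x * y) -> I (y * x).
Proof.
move=> [[I0 [IB [IL IR]]] Isq] Hxy; apply: Isq.
have : I (y * (x * y) * x) by apply: IR; apply: IL.
by rewrite !mulrA.
Qed.

Arguments csp_swap {I x y}.

Lemma csp_ins I x y t : csp I -> I (x * y) -> I (x * t * y).
Proof.
move=> cI Hxy; have Hyx := csp_swap cI Hxy.
case: cI => [[I0 [IB [IL IR]]] Isq]; apply: Isq.
have : I (x * t * (y * x) * (t * y)) by apply: IR; apply: IL.
by rewrite !mulrA.
Qed.

Arguments csp_ins {I x y} t.

Lemma csp_pow I a b k : csp I -> I (a ^+ k.+1 * b) -> I (a * b).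
Proof.
move=> cI; elim: k => [|k IH]; first by rewrite expr1.
move=> H; apply: IH.
set y := a ^+ k.+1 * b.
have Hay : I (a * y) by rewrite /y mulrA -exprS.
have Hya := csp_swap cI Hay.
case: (cI) => [[I0 [IB [IL IR]]] Isq]; apply: Isq.
have : I (y * a * (a ^+ k * b)) by apply: IR.
by rewrite -mulrA [a * _]mulrA -exprS.
Qed.

Arguments csp_pow {I a b k}.

Lemma ideal_pow (P : R -> Prop) x n : is_ideal P -> P (x ^+ n) ->
  (forall a b, P (a * b) -> P a \/ P b) -> P x.
Proof.
move=> [I0 [IB [IL IR]]] Hn cp; elim: n Hn => [|n IH].
  by rewrite expr0 => H1; rewrite -(mul1r x); apply: IR.
by rewrite exprS => /cp [].
Qed.

Lemma prime_radical_ideal : is_ideal (@prime_radical R).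
Proof.
split; first by move=> P [[]].
split; first by move=> x y Hx Hy P HP; case: (HP) => [[_ [H _]] _]; apply: H; [apply: Hx|apply: Hy].
split; first by move=> r x Hx P HP; case: (HP) => [[_ [_ [H _]]] _]; apply: H; apply: Hx.
by move=> r x Hx P HP; case: (HP) => [[_ [_ [_ H]]] _]; apply: H; apply: Hx.
Qed.

Lemma nil_csp : two_primal R -> csp (@nilpotents R).
Proof.
move=> H2.
have [I0 [IB [IL IR]]] := prime_radical_ideal.
split.
  split; first by exists 1%N; rewrite expr1.
  split; first by move=> x y /H2 Hx /H2 Hy; apply/H2; apply: IB.
  split; first by move=> r x /H2 Hx; apply/H2; apply: IL.
  by move=> r x /H2 Hx; apply/H2; apply: IR.
move=> r [n Hn]; exists (2 * n)%N; by rewrite exprM expr2.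
Qed.

Lemma T_csp (A : R -> Prop) u v : csp A ->
  csp (fun r => A (u * r * v)) /\ (forall r, A r -> A (u * r * v)).
Proof.
move=> cA; have cA' := cA; case: cA' => [[I0 [IB [IL IR]]] Isq].
split; last by move=> r Hr; apply: IR; apply: IL.
split; last first.
  move=> r Hr.
  have H1 : A ((u * r) * (r * v)) by rewrite !mulrA -[u * r * r]mulrA.
  have := csp_ins (v * u) cA H1.
  by rewrite !mulrA => H; apply: Isq; rewrite !mulrA.
split; first by rewrite mulr0 mul0r.
split; first by move=> x y Hx Hy; rewrite mulrBr mulrBl; apply: IB.
split.
  move=> r x Hx; have H1 : A (u * (x * v)) by rewrite mulrA.
  by have := csp_ins r cA H1; rewrite !mulrA.
move=> r x Hx; have := csp_ins r cA Hx; by rewrite !mulrA.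
Qed.

Lemma betaco_nil (x : R) : two_primal R -> beta_co x -> nilpotents x.
Proof.
move=> H2 Hx; apply: contrapT => Hnx.
pose G (A : R -> Prop) := csp A /\ forall n, ~ A (x ^+ n).
pose Pz (A : set R) := A = set0 \/ G A.
have GN : G (@nilpotents R).
  split; first exact: nil_csp.
  by move=> n [m]; rewrite -exprM => Hm; apply: Hnx; exists (n * m)%N.
have [A [PzA maxA]] : exists A, Pz A /\ forall B, A `<` B -> ~ Pz B.
  apply: Zorn_bigcup => F FP Ftot.
  have good X y : F X -> X y -> G X.
    by move=> FX Xy; case: (FP X FX) => // X0; rewrite X0 in Xy.
  have bU X y : F X -> X y -> (\bigcup_(X in F) X) y.
    by move=> FX Xy; rewrite /bigcup /mkset; exists X.
  have [[X0 [FX0 [y0 X0y0]]]|no] := pselect (exists X, F X /\ exists y, X y).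
    right; split; last first.
      by move=> n [X FX Xn]; have [_ Hn] := good _ _ FX Xn; apply: (Hn n).
    split; last first.
      move=> r [X FX Xr]; have [[_ Hs] _] := good _ _ FX Xr.
      by apply: (bU X) => //; apply: Hs.
    have [[[I0 _] _] _] := good _ _ FX0 X0y0.
    split; first exact: (bU X0 _ FX0 I0).
    split.
      move=> a b [X FX Xa] [Y FY Yb].
      have [[[_ [IBX _]] _] _] := good _ _ FX Xa.
      have [[[_ [IBY _]] _] _] := good _ _ FY Yb.
      case: (Ftot X Y FX FY) => sub.
        by apply: (bU Y) => //; apply: IBY => //; apply: sub.
      by apply: (bU X) => //; apply: IBX => //; apply: sub.
    split.
      move=> r a [X FX Xa]; have [[[_ [_ [IL _]]] _] _] := good _ _ FX Xa.
      by apply: (bU X) => //; apply: IL.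
    move=> r a [X FX Xa]; have [[[_ [_ [_ IR]]] _] _] := good _ _ FX Xa.
    by apply: (bU X) => //; apply: IR.
  left; apply/seteqP; split => // y [X FX Xy].
  by exfalso; apply: no; exists X; split => //; exists y.
have GA : G A.
  case: PzA => // A0; exfalso; apply: (maxA (@nilpotents R)); last by right.
  rewrite A0; split => // sub.
  by have := sub 0 (ltac:(by exists 1%N; rewrite expr1)).
have [cA nA] := GA.
have key u v : ~ (forall r, A (u * r * v) -> A r) -> exists n, A (u * x ^+ n * v).
  move=> nsub; have [cT sT] := T_csp A u v cA.
  apply: contrapT => nex.
  apply: (maxA (fun r => A (u * r * v))).
    split; first exact: sT.
    by move=> sub; apply: nsub => r; apply: sub.
  right; split => // n Hn; apply: nex; exists n; exact: Hn.
have cpA : is_completely_prime_ideal A.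
  split; first by case: cA.
  split; first by exists x; rewrite -[x]expr1; apply: nA.
  move=> a b Hab; apply: contrapT => /not_orP [na nb].
  have [m Hm] : exists n, A (a * x ^+ n * 1).
    apply: key => sub; apply: nb; apply: sub; by rewrite mulr1.
  have [k Hk] : exists n, A (1 * x ^+ n * x ^+ m).
    apply: key => sub; apply: na; apply: sub; by rewrite mul1r mulr1 in Hm *.
  by apply: (nA (k + m)%N); rewrite exprD; rewrite mul1r in Hk.
by apply: (nA 1%N); rewrite expr1; apply: Hx.
Qed.

End Aux.

Theorem corollary4p5 (R : pzRingType) :
  two_primal R ->
  set_eq (@prime_radical R) (@nilpotents R) /\
  set_eq (@nilpotents R) (@E_R0 R) /\
  set_eq (@E_R0 R) (@beta_co R).
Proof.
move=> H2.
have EN : forall x, @E_R0 R x -> nilpotents x.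
  move=> x [a [b [-> [[|k] Hk]]]].
    by rewrite expr0 mul1r in Hk; rewrite Hk mulr0; exists 1%N; rewrite expr1.
  apply: (@csp_pow R _ a b k (nil_csp R H2)); exists 1%N; by rewrite expr1 Hk.
have NE : forall x, nilpotents x -> @E_R0 R x.
  move=> x [n Hn]; exists x, 1; split; first by rewrite mulr1.
  by exists n; rewrite mulr1.
split; first by move=> x; split => /H2.
split; first by move=> x; split; [apply: NE | apply: EN].
move=> x; split.
  move=> /EN [n Hn] P [iP [_ cp]]; apply: (@ideal_pow R P x n) => //.
  by rewrite Hn; case: iP.
by move=> Hx; apply: NE; apply: betaco_nil.
Qed.
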